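(* Let $N\ge2$, $h=\pi/N$, $x_j=-\cos(jh)$ for $0\le j\le N$ (Chebyshev–Gauss–Lobatto points), and for $1\le j\le N-1$ let $B_j\in\mathbb{P}_N$ be the unique polynomial with $B_j(\pm1)=0$ and $B_j''(x_i)=\delta_{ij}$ for $1\le i\le N-1$. Then $$B_j(x)=\sum_{k=0}^{N-2}\beta_{kj}\Big\{\partial_x^{-2}T_k(x)-\frac{1+x}{2}\,\partial_x^{-2}T_k(1)\Big\},\qquad B_j'(x)=\sum_{k=0}^{N-2}\beta_{kj}\Big\{\partial_x^{-1}T_k(x)-\frac{\partial_x^{-2}T_k(1)}{2}\Big\},$$ where $$\beta_{kj}=\frac{2}{c_kN}\Big\{T_k(x_j)-\frac{1-(-1)^{N+k}}{2}T_{N-1}(x_j)-\frac{1+(-1)^{N+k}}{2}T_N(x_j)\Big\},$$ with $c_0=2$ and $c_k=1$ for $k\ge1$.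
   Context: $T_k(x)=\cos(k\arccos x)$ is the Chebyshev polynomial of degree $k$. $\mathbb{P}_N$ is the space of polynomials of degree at most $N$. $\partial_x^{-1}u(x)=\int_{-1}^x u(t)\,dt$ and $\partial_x^{-2}u=\partial_x^{-1}(\partial_x^{-1}u)$. *)

(* Defs.v *)
From Stdlib Require Import Reals Lra Lia ClassicalEpsilon.
Open Scope R_scope.

(* Chebyshev polynomial T_k(x) = cos(k arccos x) (meaningful on [-1,1]). *)
Definition Tcheb (k : nat) (x : R) : R := cos (INR k * acos x).

(* Riemann integral of f over [a,b] (unspecified if f is not Riemann integrable;
   all integrands used below are continuous, hence integrable). *)
Definition Rint (f : R -> R) (a b : R) : R :=
  epsilon (inhabits 0)
    (fun v => exists pr : Riemann_integrable f a b, RiemannInt pr = v).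

Definition Dm1 (u : R -> R) (x : R) : R := Rint u (-1) x.
Definition Dm2 (u : R -> R) (x : R) : R := Dm1 (Dm1 u) x.

Definition in_PN (N : nat) (f : R -> R) : Prop :=
  exists a : nat -> R, forall x, f x = sum_f_R0 (fun i => a i * x ^ i) N.

Definition cgl (N j : nat) : R := - cos (INR j * (PI / INR N)).

Definition ck (k : nat) : R := if Nat.eqb k 0 then 2 else 1.

Definition kron (i j : nat) : R := if Nat.eqb i j then 1 else 0.

Definition beta (N k j : nat) : R :=
  2 / (ck k * INR N) *
  (Tcheb k (cgl N j)
   - (1 - (-1) ^ (N + k)) / 2 * Tcheb (N - 1) (cgl N j)
   - (1 + (-1) ^ (N + k)) / 2 * Tcheb N (cgl N j)).

Definition is_Bj (N j : nat) (B B1 B2 : R -> R) : Prop :=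
  in_PN N B /\
  (forall x, derivable_pt_lim B x (B1 x)) /\
  (forall x, derivable_pt_lim B1 x (B2 x)) /\
  B (-1) = 0 /\ B 1 = 0 /\
  (forall i, (1 <= i <= N - 1)%nat -> B2 (cgl N i) = kron i j).

(* Main.v *)
Require Import Defs.
From Stdlib Require Import Reals Lra Lia ClassicalEpsilon FunctionalExtensionality.
From Coquelicot Require Coquelicot.
From mathcomp Require ssreflect ssrfun ssrbool eqtype ssrnat seq fintype bigop ssralg poly ssrnum Rstruct zify.
Open Scope R_scope.
Module FTC.
Import Coquelicot.Coquelicot.

Lemma Rint_FTC (f g F : R -> R) a b : a <= b ->
  (forall t, derivable_pt_lim F t (g t)) -> (forall t, continuity_pt g t) ->
  (forall t, a <= t <= b -> f t = g t) -> Rint f a b = F b - F a.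
Proof.
  intros hab hF hg hfg.
  assert (H : is_RInt f a b (F b - F a)).
  { apply is_RInt_ext with g.
    - intros t Ht. rewrite Rmin_left, Rmax_right in Ht by lra. symmetry; apply hfg; lra.
    - apply (is_RInt_derive F g).
      + intros t _. apply is_derive_Reals; auto.
      + intros t _. apply continuity_pt_filterlim; auto. }
  assert (Hex : ex_RInt f a b) by (unfold ex_RInt; exact (ex_intro _ _ H)).
  pose proof (ex_RInt_Reals_0 _ _ _ Hex) as pr.
  unfold Rint.
  destruct (epsilon_spec (inhabits 0) (fun v => exists pr, RiemannInt pr = v)
             (ex_intro _ _ (ex_intro _ pr eq_refl))) as [pr' E].
  rewrite <- E, <- RInt_Reals.
  apply is_RInt_unique; exact H.
Qed.
End FTC.


Definition th (N m : nat) : R := INR m * (PI / INR N).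

Lemma sin_rPI (r : nat) y : sin (INR r * PI + y) = (-1) ^ r * sin y.
Proof.
  induction r as [|r IH].
  - simpl. rewrite Rmult_0_l, Rplus_0_l; ring.
  - rewrite S_INR; simpl pow. replace ((INR r + 1) * PI + y) with ((INR r * PI + y) + PI) by ring.
    rewrite neg_sin, IH; ring.
Qed.

Lemma cos_rPI (r : nat) y : cos (y + INR r * PI) = (-1) ^ r * cos y.
Proof.
  induction r as [|r IH].
  - simpl. rewrite Rmult_0_l, Rplus_0_r; ring.
  - rewrite S_INR; simpl pow. replace (y + (INR r + 1) * PI) with ((y + INR r * PI) + PI) by ring.
    rewrite neg_cos, IH; ring.
Qed.

Lemma sum_cos_tel (al : R) (n : nat) :
  sum_f_R0 (fun k => cos (INR k * al)) n * (2 * sin (al / 2))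
  = sin (INR n * al + al / 2) + sin (al / 2).
Proof.
  induction n as [|n IH].
  - simpl. rewrite Rmult_0_l, cos_0, Rplus_0_l. ring.
  - rewrite tech5, Rmult_plus_distr_r, IH, S_INR.
    replace (INR n * al + al / 2) with ((INR n + 1) * al - al / 2) by field.
    rewrite sin_minus, sin_plus. ring.
Qed.

Definition DP (N : nat) (f : nat -> R) : R := sum_f_R0 f N - f 0%nat / 2 - f N / 2.

Lemma DP_ext N f g : (forall k, (k <= N)%nat -> f k = g k) -> DP N f = DP N g.
Proof.
  intros H. unfold DP. rewrite (sum_eq f g N) by auto. rewrite (H 0%nat), (H N) by lia. reflexivity.
Qed.

Lemma DP_lin3 N f g h c1 c2 :
  DP N (fun k => f k + c1 * g k + c2 * h k) = DP N f + c1 * DP N g + c2 * DP N h.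
Proof.
  unfold DP. rewrite (sum_plus (fun k => f k + c1 * g k) (fun k => c2 * h k)), (sum_plus f (fun k => c1 * g k)).
  rewrite (sum_eq (fun k => c1 * g k) (fun k => g k * c1)) by (intros; ring).
  rewrite (sum_eq (fun k => c2 * h k) (fun k => h k * c2)) by (intros; ring).
  rewrite <- !scal_sum. field.
Qed.

Lemma DP_Z (N r : nat) : (0 < N)%nat -> (1 <= r <= 2 * N - 1)%nat ->
  DP N (fun k => cos (INR k * th N r)) = 0.
Proof.
  intros hN hr. unfold DP.
  assert (HN : 0 < INR N) by (apply lt_0_INR; lia).
  assert (Hr : 1 <= INR r <= 2 * INR N - 1).
  { split. apply (le_INR 1); lia.
    replace (2 * INR N - 1) with (INR (2 * N - 1)). apply le_INR; lia.
    rewrite minus_INR by lia. rewrite mult_INR. simpl. ring. }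
  set (al := th N r).
  assert (Hs : 0 < sin (al / 2)).
  { apply sin_gt_0; unfold al, th.
    - apply Rmult_lt_0_compat; [|lra]. apply Rmult_lt_0_compat; [lra|].
      apply Rdiv_lt_0_compat; [apply PI_RGT_0|lra].
    - assert (0 < PI) by apply PI_RGT_0.
      assert (0 < PI * ((2 * INR N - INR r) / (2 * INR N))).
      { apply Rmult_lt_0_compat; [lra| apply Rdiv_lt_0_compat; lra]. }
      replace (INR r * (PI / INR N) / 2) with (PI - PI * ((2 * INR N - INR r) / (2 * INR N))) by (field; lra).
      lra. }
  assert (HNal : INR N * al = INR r * PI) by (unfold al, th; field; lra).
  pose proof (sum_cos_tel al N) as T.
  rewrite HNal, sin_rPI in T.
  rewrite HNal, Rmult_0_l, cos_0.
  rewrite <- (Rplus_0_l (INR r * PI)), cos_rPI, cos_0.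
  apply Rmult_eq_reg_r with (2 * sin (al / 2)); [|lra].
  rewrite Rmult_0_l. rewrite !Rmult_minus_distr_r, T. field.
Qed.

Lemma DP_Z0 N : DP N (fun _ => 1) = INR N.
Proof. unfold DP. rewrite sum_cte, S_INR. field. Qed.

Lemma DP_zero N : DP N (fun _ => 0) = 0.
Proof. unfold DP. rewrite sum_cte. field. Qed.

Lemma DP_alt (N a : nat) : (0 < N)%nat -> (1 <= a <= N - 1)%nat ->
  DP N (fun k => (-1) ^ k * cos (INR k * th N a)) = 0.
Proof.
  intros hN ha.
  assert (HN : 0 < INR N) by (apply lt_0_INR; lia).
  rewrite <- (DP_Z N (a + N)) by lia.
  apply DP_ext. intros k _.
  replace (INR k * th N (a + N)) with (INR k * th N a + INR k * PI).
  - rewrite cos_rPI. ring.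
  - unfold th. rewrite plus_INR. field. lra.
Qed.

Lemma cos_prod x y : cos x * cos y = 0 + / 2 * cos (x + y) + / 2 * cos (x - y).
Proof. rewrite cos_plus, cos_minus. field. Qed.

Ltac fin_cos := apply f_equal2; [apply f_equal2; [reflexivity| apply f_equal; apply f_equal; ring] | first [reflexivity | apply f_equal; apply f_equal; ring]].

Lemma DP_orth (N a b : nat) : (0 < N)%nat -> (1 <= a <= N - 1)%nat -> (1 <= b <= N - 1)%nat ->
  DP N (fun k => cos (INR k * th N b) * cos (INR k * th N a))
  = if Nat.eqb a b then INR N / 2 else 0.
Proof.
  intros hN ha hb.
  assert (HN : 0 < INR N) by (apply lt_0_INR; lia).
  destruct (Nat.lt_total a b) as [H|[H|H]].
  - replace (Nat.eqb a b) with false by (symmetry; apply Nat.eqb_neq; lia).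
    rewrite (DP_ext N _ (fun k => 0 + /2 * cos (INR k * th N (a + b)) + /2 * cos (INR k * th N (b - a)))).
    + rewrite DP_lin3, DP_zero, !DP_Z by lia. ring.
    + intros k _. rewrite cos_prod. unfold th. rewrite plus_INR, minus_INR by lia.
      fin_cos.
  - subst b. rewrite Nat.eqb_refl.
    rewrite (DP_ext N _ (fun k => 0 + /2 * cos (INR k * th N (a + a)) + /2 * 1)).
    + rewrite DP_lin3, DP_zero, DP_Z0, DP_Z by lia. field.
    + intros k _. rewrite cos_prod. unfold th. rewrite plus_INR.
      rewrite Rminus_diag, cos_0.
      fin_cos.
  - replace (Nat.eqb a b) with false by (symmetry; apply Nat.eqb_neq; lia).
    rewrite (DP_ext N _ (fun k => 0 + /2 * cos (INR k * th N (a + b)) + /2 * cos (INR k * th N (a - b)))).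
    + rewrite DP_lin3, DP_zero, !DP_Z by lia. ring.
    + intros k _. rewrite cos_prod. unfold th. rewrite plus_INR, minus_INR by lia.
      rewrite <- (cos_neg (_ - _)).
      fin_cos.
Qed.

Lemma th_bounds N m : (0 < N)%nat -> (m <= N)%nat -> 0 <= th N m <= PI.
Proof.
  intros hN hm. assert (HN : 0 < INR N) by (apply lt_0_INR; lia).
  assert (HP : 0 < PI) by apply PI_RGT_0.
  assert (0 <= INR m <= INR N) by (split; [apply pos_INR| apply le_INR; lia]).
  unfold th. split.
  - apply Rmult_le_pos; [lra|]. apply Rlt_le, Rdiv_lt_0_compat; lra.
  - replace PI with (INR N * (PI / INR N)) at 2 by (field; lra).
    apply Rmult_le_compat_r; [apply Rlt_le, Rdiv_lt_0_compat; lra | lra].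
Qed.

Lemma Tcheb_cgl N i k : (0 < N)%nat -> (i <= N)%nat ->
  Tcheb k (cgl N i) = cos (INR k * th N (N - i)).
Proof.
  intros hN hi. assert (HN : 0 < INR N) by (apply lt_0_INR; lia).
  unfold Tcheb, cgl.
  replace (- cos (INR i * (PI / INR N))) with (cos (th N (N - i))).
  - rewrite acos_cos; [reflexivity| apply th_bounds; lia].
  - unfold th. rewrite minus_INR by lia.
    replace ((INR N - INR i) * (PI / INR N)) with (PI - INR i * (PI / INR N)) by (field; lra).
    apply Rtrigo_facts.cos_pi_minus.
Qed.

Lemma sum_ck (f : nat -> R) M : sum_f_R0 (fun k => f k / ck k) M = sum_f_R0 f M - f 0%nat / 2.
Proof.
  induction M as [|M IH].
  - simpl. unfold ck. simpl. field.
  - rewrite !tech5, IH. unfold ck. simpl. field.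
Qed.

Lemma trig_main N i j : (2 <= N)%nat -> (1 <= i <= N - 1)%nat -> (1 <= j <= N - 1)%nat ->
  sum_f_R0 (fun k => beta N k j * Tcheb k (cgl N i)) (N - 2) = kron i j.
Proof.
  intros hN hi hj.
  assert (HN : 0 < INR N) by (apply lt_0_INR; lia).
  set (G := fun k => (Tcheb k (cgl N j) - (1 - (-1) ^ (N + k)) / 2 * Tcheb (N - 1) (cgl N j)
                      - (1 + (-1) ^ (N + k)) / 2 * Tcheb N (cgl N j)) * Tcheb k (cgl N i)).
  rewrite (sum_eq _ (fun k => G k / ck k * (2 / INR N))).
  2:{ intros k _. unfold G, beta.
      assert (ck k <> 0) by (unfold ck; destruct (Nat.eqb k 0); lra).
      field. split; lra. }
  rewrite <- scal_sum, sum_ck.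
  assert (E : DP N G = sum_f_R0 G (N - 2) - G 0%nat / 2).
  { unfold DP.
    destruct N as [|[|M]]; [lia|lia|].
    replace (S (S M) - 2)%nat with M by lia.
    rewrite !tech5.
    assert (G1 : G (S M) = 0).
    { unfold G. replace (S (S M) + S M)%nat with (S (2 * (S M))) by lia.
      replace (S (S M) - 1)%nat with (S M) by lia.
      rewrite pow_1_odd. field. }
    assert (G2 : G (S (S M)) = 0).
    { unfold G. replace (S (S M) + S (S M))%nat with (2 * (S (S M)))%nat by lia.
      rewrite pow_1_even. field. }
    rewrite G1, G2. field. }
  rewrite <- E.
  set (a := (N - i)%nat). set (b := (N - j)%nat).
  set (C1 := cos (INR (N - 1) * th N b)). set (C2 := cos (INR N * th N b)).
  rewrite (DP_ext N G (fun k => cos (INR k * th N b) * cos (INR k * th N a)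
             + (- (C1 + C2) / 2) * cos (INR k * th N a)
             + ((-1) ^ N * (C1 - C2) / 2) * ((-1) ^ k * cos (INR k * th N a)))).
  2:{ intros k _. unfold G. rewrite !Tcheb_cgl by lia. fold a b C1 C2.
      replace (N - N)%nat with 0%nat by lia. rewrite pow_add.
      field. }
  rewrite DP_lin3, DP_orth, DP_Z, DP_alt by lia.
  unfold kron.
  destruct (Nat.eqb a b) eqn:Eab; destruct (Nat.eqb i j) eqn:Eij; try field; try lra.
  - apply Nat.eqb_eq in Eab. apply Nat.eqb_neq in Eij. unfold a, b in Eab. lia.
  - apply Nat.eqb_neq in Eab. apply Nat.eqb_eq in Eij. unfold a, b in Eab. lia.
Qed.

Definition mone : R := -1.

Lemma Tcheb_rec k x : -1 <= x <= 1 ->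
  Tcheb (S (S k)) x = (Tcheb (S k) x * x + Tcheb (S k) x * x) - Tcheb k x.
Proof.
  intros hx. unfold Tcheb.

  set (a := acos x).
  replace (INR (S (S k)) * a) with (INR (S k) * a + a) by (rewrite !S_INR; ring).
  replace (INR k * a) with (INR (S k) * a - a) by (rewrite !S_INR; ring).
  rewrite cos_plus, cos_minus. unfold a. rewrite (cos_acos x hx). ring.
Qed.

Lemma Tcheb_0 x : Tcheb 0 x = 1.
Proof. unfold Tcheb. simpl. rewrite Rmult_0_l. apply cos_0. Qed.

Lemma Tcheb_1 x : -1 <= x <= 1 -> Tcheb 1 x = x.
Proof. intros hx. unfold Tcheb. simpl. rewrite Rmult_1_l. apply cos_acos; exact hx. Qed.

Lemma cgl_bound N i : -1 <= cgl N i <= 1.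
Proof. unfold cgl. pose proof (COS_bound (INR i * (PI / INR N))). lra. Qed.

Lemma cgl_inj N i i' : (0 < N)%nat -> (i <= N)%nat -> (i' <= N)%nat -> cgl N i = cgl N i' -> i = i'.
Proof.
  intros hN hi hi' E. unfold cgl in E.
  assert (HN : 0 < INR N) by (apply lt_0_INR; lia).
  assert (HP : 0 < PI) by apply PI_RGT_0.
  assert (E2 : th N i = th N i').
  { apply cos_inj; try (apply th_bounds; lia). unfold th. lra. }
  unfold th in E2. apply INR_eq. apply Rmult_eq_reg_r with (PI / INR N); auto.
  apply Rgt_not_eq, Rdiv_lt_0_compat; lra.
Qed.

Definition inI (x : R) : Prop := -1 <= x <= 1.

Definition halfR : R := / 2.
Lemma one_plus_mone : 1 + mone = 0. Proof. unfold mone. ring. Qed.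
Lemma half2 : halfR * (1 + 1) = 1. Proof. unfold halfR. field. Qed.
Lemma mone_neq1 : mone <> 1. Proof. unfold mone. lra. Qed.

Definition F2 N j x (D2 : nat -> R -> R) : R :=
  sum_f_R0 (fun k => beta N k j * (D2 k x - (1 + x) / 2 * D2 k 1)) (N - 2).
Definition F1 N j x (D1 D2 : nat -> R -> R) : R :=
  sum_f_R0 (fun k => beta N k j * (D1 k x - D2 k 1 / 2)) (N - 2).

Lemma F2_ext N j x D D' : (forall k, D k x = D' k x /\ D k 1 = D' k 1) -> F2 N j x D = F2 N j x D'.
Proof. intros H. unfold F2. apply sum_eq. intros k _. destruct (H k) as [H1 H2]. rewrite H1, H2. reflexivity. Qed.
Lemma F1_ext N j x D1 D1' D D' : (forall k, D1 k x = D1' k x /\ D k 1 = D' k 1) -> F1 N j x D1 D = F1 N j x D1' D'.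
Proof. intros H. unfold F1. apply sum_eq. intros k _. destruct (H k) as [H1 H2]. rewrite H1, H2. reflexivity. Qed.

Lemma term2 b u v x : b * (u - v * halfR * (1 + x)) = b * (u - (1 + x) / 2 * v).
Proof. unfold halfR. field. Qed.
Lemma term1 b u v : b * (u - v * halfR) = b * (u - v / 2).
Proof. unfold halfR. field. Qed.


Module PB.
Import ssreflect ssrfun ssrbool eqtype ssrnat seq fintype bigop ssralg poly ssrnum Rstruct zify.
Import GRing.Theory Num.Theory.
Local Open Scope ring_scope.

Lemma horner_derive (p : {poly R}) x : derivable_pt_lim (fun y => p.[y]) x (p^`().[x]).
Proof.
elim/poly_ind: p x => [|p c IH] x.
  have -> : (fun y => (0 : {poly R}).[y]) = fun _ => 0.
    by apply: functional_extensionality => y; rewrite horner0.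
  rewrite deriv0 horner0; exact: derivable_pt_lim_const.
have -> : (fun y => (p * 'X + c%:P).[y]) = (fun y => Rplus (Rmult p.[y] y) c).
  by apply: functional_extensionality => y; rewrite hornerMXaddC.
rewrite derivMXaddC hornerD hornerMX.
have -> : p.[x] + p^`().[x] * x = Rplus (Rplus (Rmult (p^`().[x]) x) (Rmult p.[x] 1)) 0.
  by rewrite RplusE RplusE RmultE RmultE addr0 mulr1 addrC.
apply: (derivable_pt_lim_plus (fun y => Rmult p.[y] y) (fun _ => c)); last exact: derivable_pt_lim_const.
apply: (derivable_pt_lim_mult (fun y => p.[y]) (fun y => y)) => //.
exact: derivable_pt_lim_id.
Qed.


Lemma sum_bridge (g : nat -> R) n : sum_f_R0 g n = \sum_(i < n.+1) g i.
Proof.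
elim: n => [|n IH]; first by rewrite big_ord_recr big_ord0 /= add0r.
by rewrite big_ord_recr /= -IH.
Qed.

Fixpoint chebp (k : nat) : {poly R} * {poly R} :=
  match k with
  | 0%N => (1, 'X)
  | k'.+1 => let (a, b) := chebp k' in (b, 2%:R *: (b * 'X) - a)
  end.
Definition cheb k := (chebp k).1.

Lemma cheb_rec k : cheb k.+2 = 2%:R *: (cheb k.+1 * 'X) - cheb k.
Proof. by rewrite /cheb /=; case: (chebp k). Qed.
Lemma cheb0 : cheb 0 = 1. Proof. by []. Qed.
Lemma cheb1 : cheb 1 = 'X. Proof. by []. Qed.

Lemma size_cheb k : (size (cheb k) <= k.+1)%N.
Proof.
suff H : (size (cheb k) <= k.+1)%N /\ (size (cheb k.+1) <= k.+2)%N by case: H.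
elim: k => [|k [IH1 IH2]]; first by rewrite cheb0 cheb1 size_polyX size_poly1.
split=> //; rewrite cheb_rec.
apply/leq_sizeP => i hi.
rewrite coefB coefZ coefMX.
have -> : (cheb k)`_i = 0 by apply: nth_default; apply: leq_trans IH1 _; apply: leq_trans hi; lia.
case: i hi => [|i] hi /=; first by rewrite mulr0 subr0.
rewrite (nth_default 0 (_ : size (cheb k.+1) <= i)%N) ?mulr0 ?subr0 //.
by apply: leq_trans IH2 _; lia.
Qed.


Lemma Tcheb_cheb k x : inI x -> Tcheb k x = (cheb k).[x].
Proof.
move=> hx.
suff H : Tcheb k x = (cheb k).[x] /\ Tcheb k.+1 x = (cheb k.+1).[x] by case: H.
elim: k => [|k [IH1 IH2]].
  by rewrite cheb0 cheb1 hornerC hornerX Tcheb_0 Tcheb_1.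
split=> //; rewrite Tcheb_rec // cheb_rec IH1 IH2.
by rewrite hornerD hornerN hornerZ hornerMX mulr_natl mulr2n.
Qed.

Definition integ (p : {poly R}) : {poly R} :=
  \poly_(i < (size p).+1) (if i is i'.+1 then p`_i' / i'.+1%:R else 0).

Lemma integ_deriv p : (integ p)^`() = p.
Proof.
apply/polyP => i; rewrite coef_deriv coef_poly ltnS.
case: ltnP => hi.
  by rewrite -[_ *+ _]mulr_natr divfK // pnatr_eq0.
by rewrite mul0rn nth_default.
Qed.

Lemma size_integ p : (size (integ p) <= (size p).+1)%N.
Proof. exact: size_poly. Qed.

Definition A1 k := integ (cheb k) - ((integ (cheb k)).[mone])%:P.
Definition A2 k := integ (A1 k) - ((integ (A1 k)).[mone])%:P.

Lemma A1_deriv k : (A1 k)^`() = cheb k.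
Proof. by rewrite /A1 derivB derivC subr0 integ_deriv. Qed.
Lemma A2_deriv k : (A2 k)^`() = A1 k.
Proof. by rewrite /A2 derivB derivC subr0 integ_deriv. Qed.
Lemma A1_m1 k : (A1 k).[mone] = 0.
Proof. by rewrite /A1 hornerD hornerN hornerC subrr. Qed.
Lemma A2_m1 k : (A2 k).[mone] = 0.
Proof. by rewrite /A2 hornerD hornerN hornerC subrr. Qed.

Lemma Rint_poly (f : R -> R) (P : {poly R}) x : Rle mone x ->
  (forall t, Rle mone t /\ Rle t x -> f t = P^`().[t]) -> Rint f mone x = P.[x] - P.[mone].
Proof.
move=> hx hf.
apply: (FTC.Rint_FTC f (fun t => P^`().[t]) (fun t => P.[t])) => //.
- move=> t; exact: horner_derive.
- move=> t; exact: (derivable_continuous_pt _ _ (exist _ _ (horner_derive _ t))).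
Qed.

Lemma Dm1_cheb k x : inI x -> Dm1 (Tcheb k) x = (A1 k).[x].
Proof.
move=> hx; rewrite /Dm1 -/mone.
rewrite (Rint_poly _ (A1 k)) ?A1_m1 ?subr0 //; first by rewrite /mone; case: hx.
move=> t ht; rewrite A1_deriv Tcheb_cheb //; rewrite /inI /mone in ht hx *; lra.
Qed.

Lemma Dm2_cheb k x : inI x -> Dm2 (Tcheb k) x = (A2 k).[x].
Proof.
move=> hx; rewrite /Dm2 /Dm1 -/mone.
rewrite (Rint_poly _ (A2 k)) ?A2_m1 ?subr0 //; first by rewrite /mone; case: hx.
move=> t ht; rewrite A2_deriv -Dm1_cheb //; rewrite /inI /mone in ht hx *; lra.
Qed.


Lemma deriv_sumo n (F : 'I_n -> {poly R}) :
  (\sum_(k < n) F k)^`() = \sum_(k < n) (F k)^`().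
Proof.
by rewrite (big_morph _ (@derivD R) (deriv0 R)).
Qed.

Definition Bq N j : {poly R} :=
  \sum_(k < N.-1) beta N k j *: (A2 k - ((A2 k).[1] * halfR) *: (1 + 'X)).

Lemma Bq_deriv N j : (Bq N j)^`() = \sum_(k < N.-1) beta N k j *: (A1 k - ((A2 k).[1] * halfR)%:P).
Proof.
rewrite /Bq deriv_sumo; apply: eq_bigr => k _.
rewrite derivZ derivB A2_deriv derivZ derivD derivX -polyC1 derivC add0r.
by rewrite polyC1 alg_polyC.
Qed.

Lemma Bq_deriv2 N j : (Bq N j)^`()^`() = \sum_(k < N.-1) beta N k j *: cheb k.
Proof.
rewrite Bq_deriv deriv_sumo; apply: eq_bigr => k _.
by rewrite derivZ derivB derivC subr0 A1_deriv.
Qed.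

Lemma Bq_eval N j x : (Bq N j).[x] =
  \sum_(k < N.-1) beta N k j * ((A2 k).[x] - (A2 k).[1] * halfR * (1 + x)).
Proof.
rewrite /Bq horner_sum; apply: eq_bigr => k _.
by rewrite !hornerE.
Qed.

Lemma Bq_deriv_eval N j x : (Bq N j)^`().[x] =
  \sum_(k < N.-1) beta N k j * ((A1 k).[x] - (A2 k).[1] * halfR).
Proof.
rewrite Bq_deriv horner_sum; apply: eq_bigr => k _.
by rewrite hornerZ hornerD hornerN hornerC.
Qed.

Lemma Bq_deriv2_eval N j x : (Bq N j)^`()^`().[x] =
  \sum_(k < N.-1) beta N k j * (cheb k).[x].
Proof.
rewrite Bq_deriv2 horner_sum; apply: eq_bigr => k _.
by rewrite hornerZ.
Qed.

Lemma Bq_m1 N j : (Bq N j).[mone] = 0.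
Proof.
rewrite Bq_eval big1 // => k _.
have h : 1 + mone = 0 :> R by exact: one_plus_mone.
by rewrite A2_m1 h mulr0 subr0 mulr0.
Qed.

Lemma Bq_1 N j : (Bq N j).[1] = 0.
Proof.
rewrite Bq_eval big1 // => k _.
have h : halfR * (1 + 1) = 1 :> R by exact: half2.
by rewrite -mulrA h mulr1 subrr mulr0.
Qed.


Lemma size_addle (p q : {poly R}) n : (size p <= n)%N -> (size q <= n)%N -> (size (p + q)%R <= n)%N.
Proof. move=> hp hq; apply: leq_trans (size_polyD p q) _; by rewrite geq_max hp hq. Qed.

Lemma size_sumle m (F : 'I_m -> {poly R}) n :
  (forall k, size (F k) <= n)%N -> (size (\sum_(k < m) F k)%R <= n)%N.
Proof.
move=> h; elim/big_ind: _ => //; first by rewrite size_poly0.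
by move=> p q; apply: size_addle.
Qed.

Lemma size_integ_sub p c : (size (integ p - c%:P)%R <= (size p).+1)%N.
Proof.
apply/leq_sizeP => i hi; rewrite coefB coefC.
case: i hi => [//|i] hi /=.
by rewrite subr0 nth_default //; apply: leq_trans (size_integ p) hi.
Qed.

Lemma size_A1 k : (size (A1 k) <= k.+2)%N.
Proof. apply: leq_trans (size_integ_sub _ _) _; exact: size_cheb. Qed.
Lemma size_A2 k : (size (A2 k) <= k.+3)%N.
Proof. apply: leq_trans (size_integ_sub _ _) _; exact: size_A1. Qed.

Lemma size_Bq N j : (1 < N)%N -> (size (Bq N j) <= N.+1)%N.
Proof.
move=> hN; apply: size_sumle => k.
apply: leq_trans (size_scale_leq _ _) _; apply: size_addle.
  apply: leq_trans (size_A2 k) _; have := ltn_ord k; lia.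
rewrite size_polyN; apply: leq_trans (size_scale_leq _ _) _; apply: size_addle.
  by rewrite size_poly1.
rewrite size_polyX; lia.
Qed.

Lemma Bq_PN N j : (1 < N)%N -> in_PN N (fun x => (Bq N j).[x]).
Proof.
move=> hN; exists (fun i => (Bq N j)`_i) => x.
rewrite sum_bridge (horner_coef_wide _ (size_Bq N j hN)).
by apply: eq_bigr => i _; rewrite RpowE.
Qed.

Lemma Bq_nodes N i j : (1 < N)%N -> (0 < i < N)%N -> (0 < j < N)%N ->
  (Bq N j)^`()^`().[cgl N i] = kron i j.
Proof.
move=> hN hi hj.
rewrite Bq_deriv2_eval -(trig_main N i j); try lia.
have -> : N.-1 = (N - 2)%N.+1 by lia.
rewrite sum_bridge; apply: eq_bigr => k _.
by rewrite Tcheb_cheb //; exact: cgl_bound.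
Qed.


Lemma poly_unique N j (p : {poly R}) : (1 < N)%N -> (0 < j < N)%N -> (size p <= N.+1)%N ->
  (forall i, (0 < i < N)%N -> p^`()^`().[cgl N i] = kron i j) ->
  p.[mone] = 0 -> p.[1] = 0 -> p = Bq N j.
Proof.
move=> hN hj hp hnodes hm h1.
set D := p - Bq N j.
have hD : (size D <= N.+1)%N by apply: size_addle; rewrite ?size_polyN ?size_Bq.
have D2 : D^`()^`() = 0.
  apply/eqP; apply: contraT => nz.
  have := @max_poly_roots _ (D^`()^`()) [seq cgl N i | i <- iota 1 N.-1] nz.
  have -> : all (root D^`()^`()) [seq cgl N i | i <- iota 1 N.-1].
    apply/allP => y /mapP [i]; rewrite mem_iota => hi ->.
    rewrite /root /D !derivB hornerD hornerN hnodes ?Bq_nodes ?subrr //; lia.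
  have -> : uniq [seq cgl N i | i <- iota 1 N.-1].
    rewrite map_inj_in_uniq ?iota_uniq // => a b; rewrite !mem_iota => ha hb E.
    apply: (cgl_inj N) E; lia.
  move=> /(_ isT isT); rewrite size_map size_iota.
  have : (size D^`()^`() <= N.-1)%N.
    apply/leq_sizeP => m hm2; rewrite !coef_deriv (nth_default 0 (_ : (size D <= m.+2)%N)) ?mul0rn //.
    apply: leq_trans hD _; lia.
  by move=> a b; move: (leq_trans b a); rewrite ltnn.
have D1 : (size D <= 2)%N.
  apply/leq_sizeP => m; case: m => [|[|m]] // _.
  move/polyP: D2 => /(_ m); rewrite !coef_deriv coef0.
  by move/eqP; rewrite !mulrn_eq0 /= => /eqP.
have D0 : D = 0.
  apply/eqP; apply: contraT => nz.
  have := @max_poly_roots _ D [:: mone; 1] nz.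
  rewrite /= /root /D !hornerD !hornerN hm h1 Bq_m1 Bq_1 subrr eqxx inE andbT.
  have -> : (mone == 1) = false by apply/eqP => E; exact: mone_neq1 E.
  by move=> /(_ isT isT); rewrite ltnNge D1.
by apply/subr0_eq.
Qed.


Definition Bf N j (x : R) : R := (Bq N j).[x].
Definition B1f N j (x : R) : R := (Bq N j)^`().[x].
Definition B2f N j (x : R) : R := (Bq N j)^`()^`().[x].

Lemma exists_Bj N j : (2 <= N)%coq_nat -> (1 <= j)%coq_nat /\ (j <= N - 1)%coq_nat ->
  is_Bj N j (Bf N j) (B1f N j) (B2f N j).
Proof.
move=> hN hj.
have hN' : (1 < N)%N by lia.
split; first exact: Bq_PN.
split; first by move=> x; exact: horner_derive.
split; first by move=> x; exact: horner_derive.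
split; first exact: (Bq_m1 N j).
split; first exact: (Bq_1 N j).
move=> i hi; rewrite /B2f Bq_nodes //; lia.
Qed.

Lemma formula_PB N j B B1 B2 : (2 <= N)%coq_nat -> (1 <= j)%coq_nat /\ (j <= N - 1)%coq_nat ->
  is_Bj N j B B1 B2 -> forall x, inI x ->
  B x = F2 N j x (fun k => Dm2 (Tcheb k)) /\ B1 x = F1 N j x (fun k => Dm1 (Tcheb k)) (fun k => Dm2 (Tcheb k)).
Proof.
move=> hN hj [[a Ha] [dB [dB1 [Bm [Bp Hn]]]]] x hx.
have hN' : (1 < N)%N by lia.
have hj' : (0 < j < N)%N by lia.
set p := \poly_(i < N.+1) a i.
have Ep : B = fun y => p.[y].
  apply: functional_extensionality => y.
  rewrite Ha horner_poly sum_bridge; apply: eq_bigr => i _; by rewrite RpowE.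
have E1 : B1 = fun y => p^`().[y].
  apply: functional_extensionality => y.
  apply: (uniqueness_limite B y); first exact: dB.
  rewrite Ep; exact: horner_derive.
have E2 : B2 = fun y => p^`()^`().[y].
  apply: functional_extensionality => y.
  apply: (uniqueness_limite B1 y); first exact: dB1.
  rewrite E1; exact: horner_derive.
have Epq : p = Bq N j.
  apply: poly_unique => //.
  - exact: size_poly.
  - move=> i hi; have := Hn i; rewrite E2; apply; lia.
  - have := Bm; rewrite Ep; exact.
  - have := Bp; rewrite Ep; exact.
have h1 : inI 1 by rewrite /inI; split; lra.
split.
- rewrite Ep Epq Bq_eval.
  rewrite (F2_ext N j x _ (fun k y => (A2 k).[y])); last first.
    by move=> k; split; apply: Dm2_cheb.
  rewrite /F2.
  have -> : N.-1 = (N - 2)%N.+1 by lia.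
  rewrite sum_bridge; apply: eq_bigr => k _; exact: term2.
- rewrite E1 Epq Bq_deriv_eval.
  rewrite (F1_ext N j x _ (fun k y => (A1 k).[y]) _ (fun k y => (A2 k).[y])); last first.
    by move=> k; split; [apply: Dm1_cheb | apply: Dm2_cheb].
  rewrite /F1.
  have -> : N.-1 = (N - 2)%N.+1 by lia.
  rewrite sum_bridge; apply: eq_bigr => k _; exact: term1.
Qed.

End PB.

Theorem proposition3p4 (N j : nat) (hN : (2 <= N)%nat) (hj : (1 <= j <= N - 1)%nat) :
  (exists B B1 B2 : R -> R, is_Bj N j B B1 B2) /\
  (forall B B1 B2 : R -> R, is_Bj N j B B1 B2 ->
     forall x, -1 <= x <= 1 ->
       B x = sum_f_R0 (fun k => beta N k j *
               (Dm2 (Tcheb k) x - (1 + x) / 2 * Dm2 (Tcheb k) 1)) (N - 2)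
       /\
       B1 x = sum_f_R0 (fun k => beta N k j *
               (Dm1 (Tcheb k) x - Dm2 (Tcheb k) 1 / 2)) (N - 2)).
Proof.
  split.
  - exists (PB.Bf N j), (PB.B1f N j), (PB.B2f N j). apply PB.exists_Bj; assumption.
  - intros B B1 B2 H x hx. exact (PB.formula_PB N j B B1 B2 hN hj H x hx).
Qed.
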